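(* Let $\tau$ be a topology on $\omega^\omega$ such that the standard foliage tree $\mathbf S$ is a $\pi$-tree on $(\omega^\omega,\tau)$. Let $Y=\bigcap_{n\in\omega}U_n$, where each $U_n$ is an open $\pi$-dense subset of the Baire space $(\omega^\omega,\tau_{\mathcal N})$. Then $Y$, as a subspace of $(\omega^\omega,\tau)$, has a $\pi$-tree.
   Context: $\tau_{\mathcal N}$ is the product topology on $\omega^\omega$ ($\omega$ discrete); $(\omega^\omega,\tau_{\mathcal N})$ is the Baire space. A tree is a pair $(Q,<)$ with $<$ irreflexive transitive and every set of predecessors well-ordered; $\mathrm{sons}(x)$ = immediate successors of $x$; a branch is a maximal chain. A foliage tree is $\mathbf F=(\mathcal T,l)$ with $\mathcal T$ a tree and leaves $\mathbf F_x=l(x)$ at nodes $x$. The standard foliage tree $\mathbf S$ has skeleton $(\omega^{<\omega},\subsetneq)$ and leaves $\mathbf S_x=\{p\in\omega^\omega: x\subseteq p\}$. For $A\subseteq\omega^\omega$: $A$ is $\pi$-dense in the Baire space iff for every $y\in\omega^{<\omega}$ the set $\{n\in\omega:\mathbf S_{y^\frown\langle n\rangle}\subseteq A\}$ is infinite. $\mathrm{fruit}_{\mathbf F}(A)=\bigcap_{x\in A}\mathbf F_x$; $\mathrm{shoot}_{\mathbf F}(z)=\{\bigcup_{s\in C}\mathbf F_s:C$ cofinite in $\mathrm{sons}(z)\}$; $\mathrm{scope}_{\mathbf F}(p)=\{y:p\in\mathbf F_y\}$; $\gamma\gg\delta$ means every nonempty $D\in\delta$ contains some nonempty $G\in\gamma$.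 A Baire foliage tree on a space $X$ is a foliage tree whose skeleton is isomorphic to $(\omega^{<\omega},\subsetneq)$, all of whose leaves are open in $X$, which is locally strict (for each non-maximal $x$, $\mathbf F_x$ is the disjoint union of the $\mathbf F_s$, $s\in\mathrm{sons}(x)$), has strict branches (at least one node, and $\mathrm{fruit}_{\mathbf F}(B)$ is a singleton for every branch $B$), and whose leaf at the least node is $X$. $\mathbf F$ grows into $X$ if for every $p\in X$ and every neighbourhood $U$ of $p$ in $X$ there is $z\in\mathrm{scope}_{\mathbf F}(p)$ with $\mathrm{shoot}_{\mathbf F}(z)\gg\{U\}$. A $\pi$-tree on $X$ is a Baire foliage tree on $X$ that grows into $X$. *)

(* Defs.v *)
From Stdlib Require Import List Arith.
Import ListNotations.

Definition baire := nat -> nat.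

Definition is_topology {T : Type} (O : (T -> Prop) -> Prop) : Prop :=
  O (fun _ => True) /\
  (forall U V, O U -> O V -> O (fun x => U x /\ V x)) /\
  (forall Fam : (T -> Prop) -> Prop, (forall U, Fam U -> O U) ->
     O (fun x => exists U, Fam U /\ U x)).

Definition open_in {T : Type} (O : (T -> Prop) -> Prop) (X V : T -> Prop) : Prop :=
  exists U, O U /\ forall x, V x <-> (U x /\ X x).

Definition sprefix (x y : list nat) : Prop := x <> y /\ exists z, y = x ++ z.

Definition sons (z s : list nat) : Prop := exists n, s = z ++ [n].

Definition is_chain (C : list nat -> Prop) : Prop :=
  forall x y, C x -> C y -> x = y \/ sprefix x y \/ sprefix y x.

Definition is_branch (C : list nat -> Prop) : Prop :=
  is_chain C /\
  forall D, is_chain D -> (forall x, C x -> D x) -> forall x, D x -> C x.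

Definition fruit {T : Type} (F : list nat -> T -> Prop) (A : list nat -> Prop) : T -> Prop :=
  fun q => forall x, A x -> F x q.

Definition is_finite {A : Type} (P : A -> Prop) : Prop :=
  exists l : list A, forall a, P a -> In a l.

Definition cofinite_in_sons (z : list nat) (C : list nat -> Prop) : Prop :=
  (forall s, C s -> sons z s) /\ is_finite (fun s => sons z s /\ ~ C s).

Definition shoot {T : Type} (F : list nat -> T -> Prop) (z : list nat) : (T -> Prop) -> Prop :=
  fun G => exists C, cofinite_in_sons z C /\
                     forall q, G q <-> exists s, C s /\ F s q.

Definition scope {T : Type} (F : list nat -> T -> Prop) (p : T) : list nat -> Prop :=
  fun y => F y p.

Definition gg {T : Type} (gamma delta : (T -> Prop) -> Prop) : Prop :=
  forall D, delta D -> (exists q, D q) ->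
    exists G, gamma G /\ (exists q, G q) /\ (forall q, G q -> D q).

Definition locally_strict {T : Type} (F : list nat -> T -> Prop) : Prop :=
  forall x, (exists s, sons x s) ->
    (forall q, F x q <-> exists s, sons x s /\ F s q) /\
    (forall s t q, sons x s -> sons x t -> s <> t -> F s q -> F t q -> False).

Definition strict_branches {T : Type} (F : list nat -> T -> Prop) : Prop :=
  forall B, is_branch B -> exists p, forall q, fruit F B q <-> q = p.

Definition baire_foliage_tree {T : Type} (O : (T -> Prop) -> Prop) (X : T -> Prop)
  (F : list nat -> T -> Prop) : Prop :=
  (forall x, open_in O X (F x)) /\
  locally_strict F /\
  strict_branches F /\
  (forall q, F [] q <-> X q).

Definition grows_into {T : Type} (O : (T -> Prop) -> Prop) (X : T -> Prop)
  (F : list nat -> T -> Prop) : Prop :=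
  forall p U, X p -> open_in O X U -> U p ->
    exists z, scope F p z /\ gg (shoot F z) (fun D => D = U).

Definition pi_tree {T : Type} (O : (T -> Prop) -> Prop) (X : T -> Prop)
  (F : list nat -> T -> Prop) : Prop :=
  baire_foliage_tree O X F /\ grows_into O X F.

Definition S_std (x : list nat) : baire -> Prop :=
  fun p => forall i, i < length x -> p i = nth i x 0.

Definition baire_open (U : baire -> Prop) : Prop :=
  forall p, U p -> exists k, forall q, (forall i, i < k -> q i = p i) -> U q.

Definition pi_dense (A : baire -> Prop) : Prop :=
  forall y : list nat,
    ~ is_finite (fun n => forall p, S_std (y ++ [n]) p -> A p).

(* Main.v *)
Require Import Defs.
From Stdlib Require Import List Arith Lia Classical ClassicalEpsilon FunctionalExtensionality.
From Stdlib Require Cantor.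
Import ListNotations.

Definition infinite_nat (P : nat -> Prop) : Prop := forall m, exists n, m <= n /\ P n.

Definition enum_prop (P : nat -> Prop) (e : nat -> nat) : Prop :=
  (forall k, P (e k)) /\ (forall k, e k < e (S k)) /\ (forall n, P n -> exists k, e k = n).

Lemma least_exists (P : nat -> Prop) : (exists n, P n) -> exists n, P n /\ forall m, P m -> n <= m.
Proof.
  intros [n Hn]. revert Hn. induction n as [n IH] using lt_wf_ind. intro Hn.
  destruct (classic (exists m, m < n /\ P m)) as [[m [Hm1 Hm2]]|Hno].
  - exact (IH m Hm1 Hm2).
  - exists n. split; [exact Hn|]. intros m Hm. destruct (le_lt_dec n m); [lia|].
    exfalso. apply Hno. eauto.
Qed.

Lemma enum_exists (P : nat -> Prop) : infinite_nat P -> exists e, enum_prop P e.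
Proof.
  intro HP.
  assert (Hn : forall m, exists n, (m <= n /\ P n) /\ forall k, (m <= k /\ P k) -> n <= k).
  { intro m. apply least_exists. apply HP. }
  set (nx := fun m => epsilon (inhabits 0) (fun n => (m <= n /\ P n) /\ forall k, (m <= k /\ P k) -> n <= k)).
  assert (Hnx : forall m, (m <= nx m /\ P (nx m)) /\ forall k, (m <= k /\ P k) -> nx m <= k).
  { intro m. unfold nx. apply epsilon_spec. apply Hn. }
  set (e := fix e k := match k with 0 => nx 0 | S k => nx (S (e k)) end).
  assert (E0 : e 0 = nx 0) by reflexivity.
  assert (ES : forall k, e (S k) = nx (S (e k))) by reflexivity.
  clearbody e.
  assert (Hin : forall k, P (e k)).
  { intros [|k]; [rewrite E0|rewrite ES]; apply Hnx. }
  assert (Hlt : forall k, e k < e (S k)).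
  { intro k. rewrite ES. destruct (Hnx (S (e k))) as [[H1 _] _]. lia. }
  exists e. split; [exact Hin|]. split; [exact Hlt|].
  intros n Pn.
  assert (Hge : forall k, k <= e k).
  { induction k; [lia|]. specialize (Hlt k). lia. }
  destruct (classic (exists k, e k <= n /\ ~ e (S k) <= n)) as [[k [Hk1 Hk2]]|Hno].
  - destruct (Nat.eq_dec (e k) n) as [Heq|Hne]; [eauto|].
    exfalso. apply Hk2. rewrite ES. apply Hnx. split; [lia|exact Pn].
  - exfalso.
    assert (forall k, e k <= n).
    { induction k.
      - rewrite E0. apply Hnx. split; [lia|exact Pn].
      - destruct (classic (e (S k) <= n)) as [?|Hc]; [assumption|].
        exfalso. apply Hno. eauto. }
    specialize (H (S n)). specialize (Hge (S n)). lia.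
Qed.

Definition enum (P : nat -> Prop) : nat -> nat :=
  epsilon (inhabits (fun n : nat => n)) (enum_prop P).

Lemma enum_spec P : infinite_nat P -> enum_prop P (enum P).
Proof. intro H. unfold enum. apply epsilon_spec. apply enum_exists, H. Qed.

Lemma enum_in P k : infinite_nat P -> P (enum P k).
Proof. intro H. apply (enum_spec P H). Qed.

Lemma enum_surj P n : infinite_nat P -> P n -> exists k, enum P k = n.
Proof. intros H Hn. apply (enum_spec P H), Hn. Qed.

Lemma enum_mono P i j : infinite_nat P -> i < j -> enum P i < enum P j.
Proof.
  intros H Hij. destruct (enum_spec P H) as [_ [Hlt _]].
  induction Hij; [apply Hlt|]. specialize (Hlt m). lia.
Qed.

Lemma enum_inj P i j : infinite_nat P -> enum P i = enum P j -> i = j.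
Proof.
  intros H Heq. destruct (lt_eq_lt_dec i j) as [[Hl|Hl]|Hl]; auto.
  - pose proof (enum_mono P i j H Hl). lia.
  - pose proof (enum_mono P j i H Hl). lia.
Qed.

Lemma enum_ge P k : infinite_nat P -> k <= enum P k.
Proof.
  intro H. induction k; [lia|]. pose proof (enum_mono P k (S k) H (Nat.lt_succ_diag_r k)). lia.
Qed.

Lemma not_finite_infinite (P : nat -> Prop) :
  (forall l, ~ (forall a, P a -> In a l)) -> infinite_nat P.
Proof.
  intros H m. apply NNPP. intro Hno. apply (H (seq 0 m)). intros a Ha.
  apply in_seq. split; [lia|]. destruct (le_lt_dec m a); [|lia].
  exfalso. apply Hno. eauto.
Qed.

Fixpoint code (l : list nat) : nat :=
  match l with [] => 0 | a :: l => S (Cantor.to_nat (a, code l)) end.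

Lemma code_inj l1 l2 : code l1 = code l2 -> l1 = l2.
Proof.
  revert l2. induction l1 as [|a l1 IH]; intros [|b l2]; try discriminate; auto.
  intro H. change (S (Cantor.to_nat (a, code l1)) = S (Cantor.to_nat (b, code l2))) in H.
  apply eq_add_S in H. apply Cantor.to_nat_inj in H. injection H as -> H.
  f_equal. apply IH, H.
Qed.

Lemma code_ge_len l : length l <= code l.
Proof.
  induction l as [|a l IH]; simpl; [lia|].
  pose proof (Cantor.to_nat_non_decreasing a (code l)). lia.
Qed.

Definition pre (b : baire) (j : nat) : list nat := map b (seq 0 j).

Lemma pre_length b j : length (pre b j) = j.
Proof. unfold pre. rewrite length_map, length_seq. reflexivity. Qed.

Lemma pre_nth b j i : i < j -> nth i (pre b j) 0 = b i.
Proof.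
  intro H. unfold pre. rewrite nth_indep with (d' := b 0) by (rewrite length_map, length_seq; lia).
  rewrite map_nth, seq_nth by lia. reflexivity.
Qed.

Lemma pre_S b j : pre b (S j) = pre b j ++ [b j].
Proof. unfold pre. rewrite seq_S, map_app. reflexivity. Qed.

Lemma S_std_pre x b : S_std x b <-> x = pre b (length x).
Proof.
  split.
  - intro H. apply nth_ext with (d := 0) (d' := 0); [rewrite pre_length; reflexivity|].
    intros i Hi. rewrite pre_nth by lia. symmetry. apply H, Hi.
  - intros H i Hi. rewrite H. rewrite pre_nth; [reflexivity|].
    rewrite H in Hi. rewrite pre_length in Hi. exact Hi.
Qed.

Lemma S_std_pre_self b j : S_std (pre b j) b.
Proof. intros i Hi. rewrite pre_length in Hi. rewrite pre_nth; auto. Qed.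

Definition prefix (a b : list nat) : Prop := exists z, b = a ++ z.

Lemma prefix_nth a b i : prefix a b -> i < length a -> nth i a 0 = nth i b 0.
Proof. intros [z ->] Hi. rewrite app_nth1; auto. Qed.

Lemma prefix_len a b : prefix a b -> length a <= length b.
Proof. intros [z ->]. rewrite length_app. lia. Qed.

Lemma prefix_refl a : prefix a a.
Proof. exists []. rewrite app_nil_r. reflexivity. Qed.

Lemma prefix_trans a b c : prefix a b -> prefix b c -> prefix a c.
Proof. intros [z1 ->] [z2 ->]. exists (z1 ++ z2). rewrite app_assoc. reflexivity. Qed.

Lemma prefix_app a z : prefix a (a ++ z).
Proof. exists z. reflexivity. Qed.

Lemma prefix_nth_iff a b :
  prefix a b <-> (length a <= length b /\ forall i, i < length a -> nth i a 0 = nth i b 0).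
Proof.
  split.
  - intro H. split; [apply prefix_len, H|]. intros; apply prefix_nth; auto.
  - intros [Hl Hn]. exists (skipn (length a) b).
    rewrite <- (firstn_skipn (length a) b) at 1. f_equal.
    apply nth_ext with (d := 0) (d' := 0).
    + rewrite length_firstn. lia.
    + intros i Hi. rewrite length_firstn in Hi. rewrite nth_firstn.
      destruct (Nat.ltb_spec i (length a)); [|lia]. symmetry. apply Hn. lia.
Qed.

Lemma S_std_prefix a b q : prefix a b -> S_std b q -> S_std a q.
Proof.
  intros Hp Hb i Hi. rewrite (prefix_nth a b i Hp Hi). apply Hb.
  pose proof (prefix_len a b Hp). lia.
Qed.

Lemma S_std_both_prefix a b q : S_std a q -> S_std b q -> length a <= length b -> prefix a b.
Proof.
  intros Ha Hb Hl. apply prefix_nth_iff. split; auto.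
  intros i Hi. rewrite <- (Ha i Hi), <- (Hb i); auto. lia.
Qed.

Lemma S_std_same a b q : S_std a q -> S_std b q -> length a = length b -> a = b.
Proof.
  intros Ha Hb Hl. apply S_std_pre in Ha. apply S_std_pre in Hb. rewrite Ha, Hb, Hl. reflexivity.
Qed.

Lemma S_std_snoc s n q : S_std (s ++ [n]) q <-> S_std s q /\ q (length s) = n.
Proof.
  split.
  - intro H. split.
    + intros i Hi. rewrite <- (app_nth1 s [n] 0 Hi). apply H. rewrite length_app. simpl. lia.
    + specialize (H (length s)). rewrite app_nth2 in H by lia. rewrite Nat.sub_diag in H.
      apply H. rewrite length_app. simpl. lia.
  - intros [H1 H2] i Hi. rewrite length_app in Hi. simpl in Hi.
    destruct (Nat.ltb_spec i (length s)).
    + rewrite app_nth1 by lia. apply H1, H.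
    + assert (i = length s) by lia. subst i. rewrite app_nth2 by lia. rewrite Nat.sub_diag. simpl. auto.
Qed.

Lemma S_std_nil q : S_std [] q.
Proof. intros i Hi. simpl in Hi. lia. Qed.

Definition lmax (l : list nat) : nat := fold_right max 0 l.

Lemma lmax_in a l : In a l -> a <= lmax l.
Proof. induction l; simpl; [tauto|]. intros [H|H]; [subst; lia|]. specialize (IHl H). lia. Qed.

Definition comparable (x y : list nat) := prefix x y \/ prefix y x.

Lemma chain_comp C x y : is_chain C -> C x -> C y -> comparable x y.
Proof.
  intros H Hx Hy. destruct (H x y Hx Hy) as [->|[[_ Hp]|[_ Hp]]].
  - left. apply prefix_refl.
  - left. exact Hp.
  - right. exact Hp.
Qed.

Lemma comp_chain x y : comparable x y -> x = y \/ sprefix x y \/ sprefix y x.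
Proof.
  intros [Hp|Hp]; destruct (list_eq_dec Nat.eq_dec x y) as [->|Hne]; auto.
  - right; left. split; auto.
  - right; right. split; auto.
Qed.

Lemma comparable_sym x y : comparable x y -> comparable y x.
Proof. unfold comparable; tauto. Qed.

Lemma comparable_nth x y i : comparable x y -> i < length x -> i < length y -> nth i x 0 = nth i y 0.
Proof.
  intros [H|H] Hx Hy; [apply prefix_nth; auto|symmetry; apply prefix_nth; auto].
Qed.

Lemma branch_add B y : is_branch B -> (forall z, B z -> comparable z y) -> B y.
Proof.
  intros [Hc Hm] Hy. apply (Hm (fun z => B z \/ z = y)).
  - intros a b [Ha| ->] [Hb| ->].
    + apply Hc; auto.
    + apply comp_chain. apply Hy, Ha.
    + apply comp_chain. apply comparable_sym, Hy, Hb.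
    + left; reflexivity.
  - intros; left; auto.
  - right; reflexivity.
Qed.

Lemma prefix_firstn y n : prefix (firstn n y) y.
Proof. exists (skipn n y). symmetry. apply firstn_skipn. Qed.

Lemma prefix_firstn_mono y n m : n <= m -> prefix (firstn n y) (firstn m y).
Proof.
  intro H. apply prefix_nth_iff. rewrite !length_firstn. split; [lia|].
  intros i Hi. rewrite !nth_firstn.
  destruct (Nat.ltb_spec i n); destruct (Nat.ltb_spec i m); auto; lia.
Qed.

Lemma prefix_firstn_len a y : prefix a y -> a = firstn (length a) y.
Proof.
  intros [z ->]. rewrite firstn_app, Nat.sub_diag, firstn_O, app_nil_r, firstn_all. reflexivity.
Qed.

Lemma branch_len B n : is_branch B -> exists x, B x /\ length x = n.
Proof.
  intro HB. induction n.
  - exists []. split; auto. apply branch_add; auto. intros z _. right. exists z. reflexivity.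
  - destruct IHn as [x [Hx Hl]].
    destruct (classic (exists y, B y /\ n < length y)) as [[y [Hy Hly]]|Hno].
    + exists (firstn (S n) y). split; [|rewrite length_firstn; lia].
      apply branch_add; auto. intros z Hz.
      destruct (chain_comp B z y (proj1 HB) Hz Hy) as [Hp|Hp].
      * destruct (le_lt_dec (length z) (S n)).
        -- left. rewrite (prefix_firstn_len z y Hp). apply prefix_firstn_mono. auto.
        -- right. rewrite (prefix_firstn_len z y Hp). apply prefix_firstn_mono. lia.
      * right. apply prefix_trans with y; auto. apply prefix_firstn.
    + exfalso. apply Hno. exists (x ++ [0]). split; [|rewrite length_app; simpl; lia].
      apply branch_add; auto. intros z Hz.
      left. apply prefix_trans with x; [|apply prefix_app].
      destruct (chain_comp B z x (proj1 HB) Hz Hx) as [Hp|Hp]; auto.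
      destruct (le_lt_dec (length z) n).
      * pose proof (prefix_len _ _ Hp). assert (length x = length z) by lia.
        destruct Hp as [w Hw]. subst z. rewrite length_app in H0.
        destruct w; simpl in *; [rewrite app_nil_r; apply prefix_refl|lia].
      * exfalso. apply Hno. eauto.
Qed.

Lemma branch_seq B : is_branch B -> exists b, forall x, B x <-> S_std x b.
Proof.
  intro HB.
  set (xs := fun n => epsilon (inhabits []) (fun x => B x /\ length x = n)).
  assert (Hxs : forall n, B (xs n) /\ length (xs n) = n).
  { intro n. unfold xs. apply epsilon_spec. apply branch_len, HB. }
  exists (fun i => nth i (xs (S i)) 0). intro x. split.
  - intros Hx i Hi. destruct (Hxs (S i)) as [H1 H2]. cbv beta.
    apply comparable_nth; [apply (chain_comp B); [apply HB|auto|auto]|lia|lia].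
  - intro Hx. destruct (Hxs (length x)) as [H1 H2].
    replace x with (xs (length x)); auto.
    apply nth_ext with (d := 0) (d' := 0); auto.
    intros i Hi. rewrite H2 in Hi. rewrite <- (Hx i Hi). cbv beta.
    destruct (Hxs (S i)) as [H3 H4].
    apply comparable_nth; [apply (chain_comp B); [apply HB|auto|auto]|lia|lia].
Qed.

Lemma seq_branch b : is_branch (fun x => S_std x b).
Proof.
  split.
  - intros x y Hx Hy. apply comp_chain.
    destruct (le_lt_dec (length x) (length y)).
    + left. apply (S_std_both_prefix x y b); auto.
    + right. apply (S_std_both_prefix y x b); auto. lia.
  - intros D HD Hsub x Hx.
    pose proof (Hsub (pre b (length x)) (S_std_pre_self b _)) as Hp.
    destruct (HD x (pre b (length x)) Hx Hp) as [->|[[_ [z Hz]]|[_ [z Hz]]]].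
    + apply S_std_pre_self.
    + assert (length z = 0). { apply (f_equal (@length nat)) in Hz. rewrite length_app, pre_length in Hz. lia. }
      destruct z; [|simpl in *; lia]. rewrite app_nil_r in Hz. rewrite <- Hz. apply S_std_pre_self.
    + assert (length z = 0). { apply (f_equal (@length nat)) in Hz. rewrite length_app, pre_length in Hz. lia. }
      destruct z; [|simpl in *; lia]. rewrite app_nil_r in Hz. rewrite Hz. apply S_std_pre_self.
Qed.

Section Constr.
Variable U : nat -> baire -> Prop.
Hypothesis HU : forall n, baire_open (U n) /\ pi_dense (U n).

Definition Y q := forall n, U n q.
Definition inU K s := forall q, S_std s q -> U K q.
Definition bad K s := ~ inU K s.
Definition good K s n := inU K (s ++ [n]).

Definition TT u K t := prefix u t /\ bad K t.
Definition Img u K m := exists t, TT u K t /\ code t = m.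
Definition tgt u K c := epsilon (inhabits []) (fun t => TT u K t /\ code t = enum (Img u K) c).
Definition thr u K s c := prefix s (tgt u K c).
Definition piece u K c s n := good K s n /\
  exists a b, enum (good K s) (Cantor.to_nat (a, b)) = n /\ enum (thr u K s) a = c.
Definition lvl u K c i := firstn (length u + i) (tgt u K c).
Definition LL u K c := length (tgt u K c) - length u.

Lemma good_inf K s : infinite_nat (good K s).
Proof.
  apply not_finite_infinite. intros l Hl. apply (proj2 (HU K) s). exists l. exact Hl.
Qed.

Lemma inU_prefix K a b : prefix a b -> inU K a -> inU K b.
Proof. intros Hp H q Hq. apply H. apply (S_std_prefix a b); auto. Qed.

Lemma bad_prefix K a b : prefix a b -> bad K b -> bad K a.
Proof. intros Hp Hb Ha. apply Hb. apply (inU_prefix K a b); auto. Qed.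

Lemma bad_ext K s : bad K s -> exists r, bad K (s ++ [r]).
Proof.
  intro H. apply NNPP. intro Hno. apply H. intros q Hq.
  assert (Hg : inU K (s ++ [q (length s)])).
  { apply NNPP. intro Hb. apply Hno. eauto. }
  apply Hg. apply S_std_snoc. auto.
Qed.

Lemma bad_long K s : bad K s -> forall L, exists t, prefix s t /\ bad K t /\ L <= length t.
Proof.
  intros Hs L. induction L.
  - exists s. split; [apply prefix_refl|]. split; auto. lia.
  - destruct IHL as [t [H1 [H2 H3]]]. destruct (bad_ext K t H2) as [r Hr].
    exists (t ++ [r]). split; [apply prefix_trans with t; auto; apply prefix_app|].
    split; auto. rewrite length_app. simpl. lia.
Qed.

Lemma Img_inf u K : bad K u -> infinite_nat (Img u K).
Proof.
  intro Hu. apply not_finite_infinite. intros l Hl.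
  destruct (bad_long K u Hu (S (lmax l))) as [t [H1 [H2 H3]]].
  assert (HI : In (code t) l). { apply Hl. exists t. split; [split|]; auto. }
  pose proof (lmax_in _ _ HI). pose proof (code_ge_len t). lia.
Qed.

Lemma tgt_spec u K c : bad K u -> TT u K (tgt u K c) /\ code (tgt u K c) = enum (Img u K) c.
Proof.
  intro Hu. unfold tgt. apply epsilon_spec.
  apply (enum_in (Img u K) c (Img_inf u K Hu)).
Qed.

Lemma tgt_surj u K t : bad K u -> TT u K t -> exists c, tgt u K c = t.
Proof.
  intros Hu Ht. destruct (enum_surj (Img u K) (code t) (Img_inf u K Hu)) as [c Hc].
  { exists t. auto. }
  exists c. apply code_inj. rewrite (proj2 (tgt_spec u K c Hu)). auto.
Qed.

Lemma thr_inf u K s : bad K u -> prefix u s -> bad K s -> infinite_nat (thr u K s).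
Proof.
  intros Hu Hus Hs. apply not_finite_infinite. intros l Hl.
  destruct (bad_long K s Hs (S (lmax (map (fun c => length (tgt u K c)) l)))) as [t [H1 [H2 H3]]].
  destruct (tgt_surj u K t Hu) as [c Hc].
  { split; auto. apply prefix_trans with s; auto. }
  assert (HI : In c l). { apply Hl. unfold thr. rewrite Hc. auto. }
  assert (In (length t) (map (fun c => length (tgt u K c)) l)).
  { rewrite <- Hc. apply (in_map (fun c => length (tgt u K c))). auto. }
  pose proof (lmax_in _ _ H). lia.
Qed.

Lemma piece_inf u K c s : bad K u -> prefix u s -> bad K s -> thr u K s c ->
  infinite_nat (piece u K c s).
Proof.
  intros Hu Hus Hs Hc. destruct (enum_surj _ c (thr_inf u K s Hu Hus Hs) Hc) as [a Ha].
  intro m. exists (enum (good K s) (Cantor.to_nat (a, m))). split.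
  - pose proof (enum_ge (good K s) (Cantor.to_nat (a, m)) (good_inf K s)).
    pose proof (Cantor.to_nat_non_decreasing a m). lia.
  - split; [apply enum_in, good_inf|]. exists a, m. auto.
Qed.

Lemma piece_unique u K c c' s n : piece u K c s n -> piece u K c' s n -> c = c'.
Proof.
  intros [_ [a [b [H1 H2]]]] [_ [a' [b' [H1' H2']]]].
  rewrite <- H1' in H1. apply enum_inj in H1; [|apply good_inf].
  apply Cantor.to_nat_inj in H1. injection H1 as -> ->. congruence.
Qed.

Lemma piece_good u K c s n : piece u K c s n -> good K s n.
Proof. intros [H _]; exact H. Qed.

Lemma piece_thr u K c s n : bad K u -> prefix u s -> bad K s -> piece u K c s n -> thr u K s c.
Proof.
  intros Hu Hus Hs [_ [a [b [_ H]]]]. rewrite <- H. apply enum_in, thr_inf; auto.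
Qed.

Lemma piece_intro u K s n : bad K u -> prefix u s -> bad K s -> good K s n ->
  exists c, piece u K c s n.
Proof.
  intros Hu Hus Hs Hg. destruct (enum_surj _ n (good_inf K s) Hg) as [k Hk].
  destruct (Cantor.of_nat k) as [a b] eqn:Hab.
  exists (enum (thr u K s) a). split; auto. exists a, b. split; auto.
  rewrite <- Hab, Cantor.cancel_to_of. auto.
Qed.

Lemma tgt_len u K c : bad K u -> length u <= length (tgt u K c).
Proof. intro Hu. apply prefix_len. apply (tgt_spec u K c Hu). Qed.

Lemma lvl_len u K c i : bad K u -> i <= LL u K c -> length (lvl u K c i) = length u + i.
Proof.
  intros Hu Hi. unfold lvl, LL in *. rewrite length_firstn. pose proof (tgt_len u K c Hu). lia.
Qed.

Lemma lvl_prefix_tgt u K c i : prefix (lvl u K c i) (tgt u K c).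
Proof. apply prefix_firstn. Qed.

Lemma lvl_mono u K c i i' : i <= i' -> prefix (lvl u K c i) (lvl u K c i').
Proof. intro H. apply prefix_firstn_mono. lia. Qed.

Lemma lvl_0 u K c : bad K u -> lvl u K c 0 = u.
Proof.
  intro Hu. unfold lvl. rewrite Nat.add_0_r. symmetry. apply prefix_firstn_len.
  apply (tgt_spec u K c Hu).
Qed.

Lemma lvl_u u K c i : bad K u -> prefix u (lvl u K c i).
Proof.
  intro Hu. rewrite <- (lvl_0 u K c Hu) at 1. apply lvl_mono. lia.
Qed.

Lemma lvl_bad u K c i : bad K u -> bad K (lvl u K c i).
Proof.
  intro Hu. apply bad_prefix with (tgt u K c). apply lvl_prefix_tgt. apply (tgt_spec u K c Hu).
Qed.

Lemma lvl_thr u K c i : thr u K (lvl u K c i) c.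
Proof. apply lvl_prefix_tgt. Qed.


Inductive node := Phi (u : list nat) (K : nat) | Ch (u : list nat) (K c i : nat).

Definition child (d : node) (m : nat) : node :=
  match d with
  | Phi u K => if excluded_middle_informative (inU K u) then Phi (u ++ [m]) (S K) else Ch u K m 0
  | Ch u K c i =>
      if lt_dec i (LL u K c) then
        match m with
        | 0 => Ch u K c (S i)
        | S j => Phi (lvl u K c i ++ [enum (piece u K c (lvl u K c i)) j]) (S K)
        end
      else Phi (lvl u K c i ++ [enum (piece u K c (lvl u K c i)) m]) (S K)
  end.

Definition leaf (d : node) : baire -> Prop :=
  match d with
  | Phi u K => fun q => Y q /\ S_std u q
  | Ch u K c i => fun q => Y q /\ exists i', i <= i' /\ i' <= LL u K c /\
       S_std (lvl u K c i') q /\ piece u K c (lvl u K c i') (q (length u + i'))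
  end.

Definition Inv (d : node) : Prop :=
  match d with
  | Phi u K => forall k, k < K -> inU k u
  | Ch u K c i => (forall k, k < K -> inU k u) /\ bad K u /\ i <= LL u K c
  end.

Lemma piece_inf_ch u K c i : bad K u -> infinite_nat (piece u K c (lvl u K c i)).
Proof.
  intro Hu. apply piece_inf; auto using lvl_u, lvl_bad, lvl_thr.
Qed.

Lemma child_inv d m : Inv d -> Inv (child d m).
Proof.
  destruct d as [u K|u K c i]; simpl.
  - intro H. destruct (excluded_middle_informative (inU K u)) as [Hin|Hb]; simpl.
    + intros k Hk. apply inU_prefix with u; [apply prefix_app|].
      destruct (Nat.eq_dec k K) as [->|]; auto. apply H. lia.
    + split; auto. split; auto. lia.
  - intros [H1 [H2 H3]].
    assert (Hphi : forall n, piece u K c (lvl u K c i) n ->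
      Inv (Phi (lvl u K c i ++ [n]) (S K))).
    { intros n Hn k Hk. simpl. destruct (Nat.eq_dec k K) as [->|].
      - apply (piece_good _ _ _ _ _ Hn).
      - apply inU_prefix with u; [|apply H1; lia].
        apply prefix_trans with (lvl u K c i); [apply lvl_u; auto|apply prefix_app]. }
    destruct (lt_dec i (LL u K c)).
    + destruct m; simpl.
      * split; [auto|split; [auto|exact l]].
      * apply Hphi. apply enum_in, piece_inf_ch; auto.
    + apply Hphi. apply enum_in, piece_inf_ch; auto.
Qed.

Lemma leaf_Ch_split u K c i q : bad K u -> i <= LL u K c ->
  (leaf (Ch u K c i) q <->
   (Y q /\ S_std (lvl u K c i) q /\ piece u K c (lvl u K c i) (q (length (lvl u K c i))))
   \/ (i < LL u K c /\ leaf (Ch u K c (S i)) q)).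
Proof.
  intros Hu Hi. rewrite lvl_len by auto. simpl. split.
  - intros [HY [i' [H1 [H2 [H3 H4]]]]].
    destruct (Nat.eq_dec i i') as [<-|Hne]; [left; auto|].
    right. split; [lia|]. split; auto. exists i'. split; [lia|]. auto.
  - intros [[HY [H1 H2]]|[Hl [HY [i' [H1 [H2 [H3 H4]]]]]]].
    + split; auto. exists i. auto.
    + split; auto. exists i'. split; [lia|]. auto.
Qed.

Lemma LS1 d q : Inv d -> (leaf d q <-> exists m, leaf (child d m) q).
Proof.
  destruct d as [u K|u K c i]; intro HI.
  - simpl child. destruct (excluded_middle_informative (inU K u)) as [Hin|Hb].
    + simpl. split.
      * intros [HY Hu]. exists (q (length u)). split; [exact HY|apply S_std_snoc; auto].
      * intros [m [HY Hm]]. split; auto. apply S_std_snoc in Hm. tauto.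
    + split.
      * intros [HY Hu]. simpl in HI.
        (* find the last bad prefix *)
        destruct (proj1 (HU K) q (HY K)) as [k Hk].
        assert (Hgk : forall d, k <= d -> inU K (pre q d)).
        { intros d Hd r Hr. apply Hk. intros i Hi. rewrite (Hr i) by (rewrite pre_length; lia).
          rewrite pre_nth by lia. reflexivity. }
        assert (Hstep : forall a b, a <= b -> bad K (pre q a) -> ~ bad K (pre q b) ->
                  exists d, a <= d < b /\ bad K (pre q d) /\ ~ bad K (pre q (S d))).
        { intros a b Hab. induction Hab; intros Ha Hb'; [tauto|].
          destruct (classic (bad K (pre q m))) as [Hm|Hm].
          - exists m. split; [lia|]. auto.
          - destruct (IHHab Ha Hm) as [d [Hd1 Hd2]]. exists d. split; [lia|]. auto. }
        assert (Hu' : u = pre q (length u)) by (apply S_std_pre; auto).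
        destruct (Hstep (length u) (max k (length u)) (Nat.le_max_r _ _)) as [d [Hd1 [Hd2 Hd3]]].
        { rewrite <- Hu'. exact Hb. }
        { intro Hc. apply Hc. apply Hgk. lia. }
        assert (Hg : good K (pre q d) (q d)).
        { unfold good. rewrite <- pre_S. apply NNPP. exact Hd3. }
        assert (Hus : prefix u (pre q d)).
        { apply (S_std_both_prefix u (pre q d) q); auto. apply S_std_pre_self. rewrite pre_length. lia. }
        destruct (piece_intro u K (pre q d) (q d) Hb Hus Hd2 Hg) as [c Hc].
        exists c. simpl. split; auto. exists (d - length u).
        pose proof (piece_thr _ _ _ _ _ Hb Hus Hd2 Hc) as Ht.
        assert (Hlv : lvl u K c (d - length u) = pre q d).
        { unfold lvl. replace (length u + (d - length u)) with d by lia.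
          rewrite (prefix_firstn_len _ _ Ht), pre_length. reflexivity. }
        split; [lia|]. split.
        { unfold LL. pose proof (prefix_len _ _ Ht). rewrite pre_length in H. lia. }
        rewrite Hlv. split; [apply S_std_pre_self|].
        replace (length u + (d - length u)) with d by lia. exact Hc.
      * intros [m Hm]. simpl in Hm. destruct Hm as [HY [i' [H1 [H2 [H3 H4]]]]].
        split; auto. apply S_std_prefix with (lvl u K m i'); auto. apply lvl_u; auto.
  - destruct HI as [HI1 [HI2 HI3]]. rewrite leaf_Ch_split by auto. simpl child.
    assert (Hpc : forall q, (Y q /\ S_std (lvl u K c i) q /\
        piece u K c (lvl u K c i) (q (length (lvl u K c i)))) <->
        exists j, leaf (Phi (lvl u K c i ++ [enum (piece u K c (lvl u K c i)) j]) (S K)) q).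
    { intro r. simpl. split.
      - intros [HY [H1 H2]]. destruct (enum_surj _ _ (piece_inf_ch u K c i HI2) H2) as [j Hj].
        exists j. split; auto. apply S_std_snoc. auto.
      - intros [j [HY Hj]]. apply S_std_snoc in Hj. destruct Hj as [Hj1 Hj2].
        split; auto. split; auto. rewrite Hj2. apply enum_in, piece_inf_ch; auto. }
    destruct (lt_dec i (LL u K c)) as [Hl|Hl].
    + rewrite Hpc. split.
      * intros [[j Hj]|[_ Hj]]; [exists (S j); exact Hj|exists 0; exact Hj].
      * intros [[|j] Hj]; [right; split; auto|left; exists j; exact Hj].
    + rewrite Hpc. split.
      * intros [[j Hj]|[Hc _]]; [exists j; exact Hj|lia].
      * intros [j Hj]. left. exists j. exact Hj.
Qed.


Lemma good_bad_conflict K s n s' q : good K s n -> S_std (s ++ [n]) q -> S_std s' q ->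
  bad K s' -> length s < length s' -> False.
Proof.
  intros Hg H1 H2 Hb Hl. apply Hb. apply inU_prefix with (s ++ [n]); auto.
  apply (S_std_both_prefix _ _ q); auto. rewrite length_app. simpl. lia.
Qed.

Lemma LS2 d n m q : Inv d -> n <> m -> leaf (child d n) q -> leaf (child d m) q -> False.
Proof.
  destruct d as [u K|u K c i]; intros HI Hnm.
  - simpl child. destruct (excluded_middle_informative (inU K u)) as [Hin|Hb].
    + simpl. intros [_ Hn] [_ Hm]. apply S_std_snoc in Hn. apply S_std_snoc in Hm.
      apply Hnm. destruct Hn as [_ <-]. destruct Hm as [_ <-]. reflexivity.
    + simpl. intros [HY [i1 [_ [H1 [H2 H3]]]]] [_ [i2 [_ [H1' [H2' H3']]]]].
      assert (E1 : length (lvl u K n i1) = length u + i1) by (apply lvl_len; auto).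
      assert (E2 : length (lvl u K m i2) = length u + i2) by (apply lvl_len; auto).
      assert (Hi : i1 = i2).
      { destruct (lt_eq_lt_dec i1 i2) as [[Hlt|Heq]|Hlt]; auto; exfalso.
        - apply (good_bad_conflict K (lvl u K n i1) (q (length u + i1)) (lvl u K m i2) q);
            auto using lvl_bad.
          + apply (piece_good u K n). exact H3.
          + apply S_std_snoc. rewrite E1. auto.
          + lia.
        - apply (good_bad_conflict K (lvl u K m i2) (q (length u + i2)) (lvl u K n i1) q);
            auto using lvl_bad.
          + apply (piece_good u K m). exact H3'.
          + apply S_std_snoc. rewrite E2. auto.
          + lia. }
      subst i2.
      assert (Hs : lvl u K n i1 = lvl u K m i1) by (apply (S_std_same _ _ q); auto; lia).
      rewrite Hs in H3. apply Hnm. apply (piece_unique u K n m (lvl u K m i1) (q (length u + i1))); auto.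
  - destruct HI as [HI1 [HI2 HI3]].
    assert (Hinf := piece_inf_ch u K c i HI2).
    set (s := lvl u K c i). set (eP := enum (piece u K c s)).
    assert (Es : length s = length u + i) by (apply lvl_len; auto).
    assert (Hpp : forall j j', j <> j' -> leaf (Phi (s ++ [eP j]) (S K)) q ->
              leaf (Phi (s ++ [eP j']) (S K)) q -> False).
    { intros j j' Hjj [_ Hj] [_ Hj']. apply S_std_snoc in Hj. apply S_std_snoc in Hj'.
      apply Hjj. apply (enum_inj (piece u K c s)); auto. destruct Hj as [_ Hj]. destruct Hj' as [_ Hj'].
      unfold eP in *. congruence. }
    assert (Hpc : forall j, i < LL u K c -> leaf (Phi (s ++ [eP j]) (S K)) q ->
              leaf (Ch u K c (S i)) q -> False).
    { intros j Hl [_ Hj] [_ [i' [H1 [H2 [H3 H4]]]]].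
      apply (good_bad_conflict K s (eP j) (lvl u K c i') q); auto using lvl_bad.
      - apply (piece_good u K c). unfold eP. apply enum_in. auto.
      - rewrite lvl_len by auto. lia. }
    simpl child. fold s. fold eP.
    destruct (lt_dec i (LL u K c)) as [Hl|Hl].
    + destruct n as [|n]; destruct m as [|m].
      * lia.
      * intros H1 H2. apply (Hpc m Hl); auto.
      * intros H1 H2. apply (Hpc n Hl); auto.
      * apply Hpp. lia.
    + apply Hpp. auto.
Qed.


Definition root := Phi [] 0.
Definition desc (x : list nat) : node := fold_left child x root.

Lemma desc_snoc x n : desc (x ++ [n]) = child (desc x) n.
Proof. unfold desc. rewrite fold_left_app. reflexivity. Qed.

Lemma Inv_desc x : Inv (desc x).
Proof.
  induction x as [|x n IH] using rev_ind.
  - simpl. intros k Hk. lia.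
  - rewrite desc_snoc. apply child_inv, IH.
Qed.

Definition core d := match d with Phi u _ => u | Ch u K c i => lvl u K c i end.

Lemma leaf_core d q : leaf d q -> S_std (core d) q.
Proof.
  destruct d as [u K|u K c i]; simpl.
  - tauto.
  - intros [_ [i' [H1 [_ [H3 _]]]]]. apply S_std_prefix with (lvl u K c i'); auto.
    apply lvl_mono; auto.
Qed.

Lemma core_child d m : Inv d -> prefix (core d) (core (child d m)).
Proof.
  destruct d as [u K|u K c i]; simpl; intro HI.
  - destruct (excluded_middle_informative (inU K u)); simpl.
    + apply prefix_app.
    + rewrite lvl_0 by auto. apply prefix_refl.
  - destruct (lt_dec i (LL u K c)).
    + destruct m; simpl; [apply lvl_mono; lia|apply prefix_app].
    + simpl. apply prefix_app.
Qed.

Lemma core_child_Ch u K c i m : Inv (Ch u K c i) ->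
  length (core (child (Ch u K c i) m)) = S (length (lvl u K c i)).
Proof.
  intros [H1 [H2 H3]]. simpl. destruct (lt_dec i (LL u K c)).
  - destruct m; simpl.
    + rewrite !lvl_len by (auto; lia). lia.
    + rewrite length_app. simpl. lia.
  - simpl. rewrite length_app. simpl. lia.
Qed.

Definition Al (d : node) (s : list nat) : Prop :=
  (exists K, d = Phi s K /\ inU K s) \/ (exists u K c i, d = Ch u K c i /\ lvl u K c i = s).

Definition meas (j : nat) (d : node) : nat :=
  2 * (j - length (core d)) + match d with Phi _ _ => 1 | Ch _ _ _ _ => 0 end.

Lemma aligned p j : Y p -> forall x, leaf (desc x) p -> length (core (desc x)) <= j ->
  exists x', leaf (desc x') p /\ Al (desc x') (pre p j).
Proof.
  intros HY.
  assert (Hind : forall n x, meas j (desc x) = n -> leaf (desc x) p -> length (core (desc x)) <= j ->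
    exists x', leaf (desc x') p /\ Al (desc x') (pre p j)).
  { intro n. induction n as [n IH] using lt_wf_ind. intros x Hn Hl Hj.
    pose proof (Inv_desc x) as HI.
    assert (Hc := leaf_core _ _ Hl).
    destruct (desc x) as [u K|u K c i] eqn:Hd.
    - simpl in Hc, Hj.
      destruct (excluded_middle_informative (inU K u)) as [Hin|Hb].
      + destruct (Nat.eq_dec (length u) j) as [<-|Hne].
        * exists x. rewrite Hd. split; auto. left. exists K.
          assert (Hu : u = pre p (length u)) by (apply S_std_pre; auto). rewrite <- Hu. auto.
        * apply (IH (meas j (desc (x ++ [p (length u)])))) with (x := x ++ [p (length u)]); auto.
          -- rewrite desc_snoc, Hd. simpl. destruct (excluded_middle_informative (inU K u)); [|tauto].
             rewrite <- Hn. unfold meas. simpl. rewrite ?length_app. simpl. lia.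
          -- rewrite desc_snoc, Hd. simpl. destruct (excluded_middle_informative (inU K u)); [|tauto].
             simpl. split; [auto|]. apply S_std_snoc. auto.
          -- rewrite desc_snoc, Hd. simpl. destruct (excluded_middle_informative (inU K u)); [|tauto].
             simpl. rewrite ?length_app. simpl. lia.
      + destruct (proj1 (LS1 _ p HI) Hl) as [m Hm].
        apply (IH (meas j (desc (x ++ [m])))) with (x := x ++ [m]); auto.
        * rewrite <- Hn, desc_snoc, Hd. unfold child. destruct (excluded_middle_informative (inU K u)); [tauto|].
          unfold meas. cbn [core]. rewrite lvl_0 by auto. lia.
        * rewrite desc_snoc, Hd. exact Hm.
        * rewrite desc_snoc, Hd. unfold child. destruct (excluded_middle_informative (inU K u)); [tauto|].
          cbn [core]. rewrite lvl_0 by auto. auto.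
    - simpl in Hc, Hj.
      destruct (Nat.eq_dec (length (lvl u K c i)) j) as [<-|Hne].
      + exists x. rewrite Hd. split; auto. right. exists u, K, c, i. split; auto.
        apply S_std_pre; auto.
      + destruct (proj1 (LS1 _ p HI) Hl) as [m Hm].
        pose proof (core_child_Ch u K c i m HI) as Hcl.
        apply (IH (meas j (desc (x ++ [m])))) with (x := x ++ [m]); auto.
        * rewrite <- Hn, desc_snoc, Hd. unfold meas. rewrite Hcl. cbn [core].
          assert (length (lvl u K c i) < j) by lia.
          destruct (child (Ch u K c i) m); lia.
        * rewrite desc_snoc, Hd. exact Hm.
        * rewrite desc_snoc, Hd. rewrite Hcl. lia. }
  intros x Hl Hj. eapply Hind; eauto.
Qed.


Section Path.
Variable beta : baire.
Definition D j := desc (pre beta j).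

Lemma D_S j : D (S j) = child (D j) (beta j).
Proof. unfold D. rewrite pre_S, desc_snoc. reflexivity. Qed.

Lemma D_0 : D 0 = Phi [] 0.
Proof. reflexivity. Qed.

Lemma prog_ch : forall n j u K c i, D j = Ch u K c i -> LL u K c - i = n ->
  exists j' u', j < j' /\ D j' = Phi u' (S K) /\ S (length u + i) <= length u'.
Proof.
  induction n; intros j u K c i Hd Hn; pose proof (Inv_desc (pre beta j)) as HI; fold (D j) in HI;
    rewrite Hd in HI; destruct HI as [H1 [H2 H3]].
  - exists (S j), (lvl u K c i ++ [enum (piece u K c (lvl u K c i)) (beta j)]).
    rewrite D_S, Hd. simpl. destruct (lt_dec i (LL u K c)); [lia|].
    split; [lia|]. split; [reflexivity|]. rewrite length_app, lvl_len by auto. simpl. lia.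
  - destruct (beta j) as [|b] eqn:Hb.
    + destruct (IHn (S j) u K c (S i)) as [j' [u' [Hj1 [Hj2 Hj3]]]].
      * rewrite D_S, Hd, Hb. simpl. destruct (lt_dec i (LL u K c)); [reflexivity|lia].
      * lia.
      * exists j', u'. split; [lia|]. split; auto. lia.
    + exists (S j). rewrite D_S, Hd, Hb. simpl. destruct (lt_dec i (LL u K c)); [|lia].
      eexists. split; [lia|]. split; [reflexivity|]. rewrite length_app, lvl_len by auto. simpl. lia.
Qed.

Lemma prog_phi j u K : D j = Phi u K ->
  exists j' u', j < j' /\ D j' = Phi u' (S K) /\ S (length u) <= length u'.
Proof.
  intro Hd. destruct (excluded_middle_informative (inU K u)) as [Hin|Hb].
  - exists (S j), (u ++ [beta j]). rewrite D_S, Hd. simpl.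
    destruct (excluded_middle_informative (inU K u)); [|tauto].
    split; [lia|]. split; [reflexivity|]. rewrite length_app. simpl. lia.
  - assert (HS : D (S j) = Ch u K (beta j) 0).
    { rewrite D_S, Hd. simpl. destruct (excluded_middle_informative (inU K u)); [tauto|reflexivity]. }
    destruct (prog_ch _ (S j) u K (beta j) 0 HS eq_refl) as [j' [u' [H1 [H2 H3]]]].
    exists j', u'. split; [lia|]. split; auto. lia.
Qed.

Lemma prog_N N : exists j u K, D j = Phi u K /\ N <= K /\ N <= length u.
Proof.
  induction N.
  - exists 0, [], 0. split; [reflexivity|]. lia.
  - destruct IHN as [j [u [K [H1 [H2 H3]]]]].
    destruct (prog_phi j u K H1) as [j' [u' [H4 [H5 H6]]]].
    exists j', u', (S K). split; auto. lia.
Qed.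

Lemma core_mono j j' : j <= j' -> prefix (core (D j)) (core (D j')).
Proof.
  intro H. induction H; [apply prefix_refl|].
  apply prefix_trans with (core (D m)); auto. rewrite D_S. apply core_child.
  apply Inv_desc.
Qed.

Lemma leaf_mono j j' q : j <= j' -> leaf (D j') q -> leaf (D j) q.
Proof.
  intro H. induction H; auto. intro Hq. apply IHle.
  apply (LS1 (D m) q (Inv_desc _)). exists (beta m). rewrite <- D_S. exact Hq.
Qed.

Definition Jf (i : nat) : nat := epsilon (inhabits 0) (fun j => i < length (core (D j))).

Lemma Jf_spec i : i < length (core (D (Jf i))).
Proof.
  unfold Jf. apply epsilon_spec. destruct (prog_N (S i)) as [j [u [K [H1 [H2 H3]]]]].
  exists j. rewrite H1. simpl. lia.
Qed.

Definition ppt : baire := fun i => nth i (core (D (Jf i))) 0.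

Lemma core_nth j j' i : i < length (core (D j)) -> i < length (core (D j')) ->
  nth i (core (D j)) 0 = nth i (core (D j')) 0.
Proof.
  intros H1 H2. destruct (le_lt_dec j j').
  - apply prefix_nth; auto. apply core_mono; auto.
  - symmetry. apply prefix_nth; auto. apply core_mono; lia.
Qed.

Lemma ppt_core j : S_std (core (D j)) ppt.
Proof.
  intros i Hi. unfold ppt. apply core_nth; auto. apply Jf_spec.
Qed.

Lemma ppt_Y : Y ppt.
Proof.
  intro n. destruct (prog_N (S n)) as [j [u [K [H1 [H2 H3]]]]].
  pose proof (Inv_desc (pre beta j)) as HI. fold (D j) in HI. rewrite H1 in HI. simpl in HI.
  apply (HI n); [lia|]. pose proof (ppt_core j) as Hc. rewrite H1 in Hc. exact Hc.
Qed.

Lemma ppt_leaf j : leaf (D j) ppt.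
Proof.
  destruct (prog_N (S (length (core (D j))))) as [j' [u [K [H1 [H2 H3]]]]].
  assert (j <= j').
  { destruct (le_lt_dec j j'); auto. exfalso.
    pose proof (prefix_len _ _ (core_mono j' j ltac:(lia))). rewrite H1 in H. simpl in H. lia. }
  apply leaf_mono with j'; auto. rewrite H1. simpl. split; [apply ppt_Y|].
  pose proof (ppt_core j') as Hc. rewrite H1 in Hc. exact Hc.
Qed.

Lemma ppt_unique q : (forall j, leaf (D j) q) -> q = ppt.
Proof.
  intro H. apply functional_extensionality. intro i. unfold ppt.
  pose proof (leaf_core _ _ (H (Jf i))) as Hc. apply Hc. apply Jf_spec.
Qed.

End Path.

End Constr.

Lemma bo_tau (tau : (baire -> Prop) -> Prop) (Htop : is_topology tau)
  (Ho : forall x, open_in tau (fun _ => True) (S_std x)) (A : baire -> Prop) :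
  baire_open A -> exists V, tau V /\ forall q, V q <-> A q.
Proof.
  intro HA. destruct Htop as [_ [_ Hun]].
  set (Fam := fun V : baire -> Prop => tau V /\ forall q, V q -> A q).
  exists (fun x => exists V, Fam V /\ V x). split.
  - apply Hun. intros V [HV _]. exact HV.
  - intro q. split.
    + intros [V [[_ HV] Hq]]. apply HV, Hq.
    + intro Hq. destruct (HA q Hq) as [k Hk].
      destruct (Ho (pre q k)) as [V1 [HV1 HV1e]].
      exists V1. split.
      * split; auto. intros r Hr. apply Hk. intros i Hi.
        assert (Hr' : S_std (pre q k) r) by (apply HV1e; split; auto). 
        rewrite (Hr' i) by (rewrite pre_length; lia). rewrite pre_nth by lia. reflexivity.
      * apply (proj1 (HV1e q) (S_std_pre_self q k)).
Qed.

Lemma leaf_open U d : exists A, baire_open A /\ forall q, leaf U d q <-> A q /\ Y U q.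
Proof.
  destruct d as [u K|u K c i].
  - exists (S_std u). split.
    + intros p Hp. exists (length u). intros q Hq i Hi. rewrite Hq by auto. apply Hp, Hi.
    + intro q. simpl. tauto.
  - exists (fun q => exists i', i <= i' /\ i' <= LL U u K c /\
       S_std (lvl U u K c i') q /\ piece U u K c (lvl U u K c i') (q (length u + i'))).
    split.
    + intros p [i' [H1 [H2 [H3 H4]]]]. exists (S (length u + i')). intros q Hq.
      exists i'. split; auto. split; auto. split.
      * intros k Hk. rewrite Hq. apply H3, Hk. unfold lvl in Hk. rewrite length_firstn in Hk. lia.
      * rewrite Hq by lia. exact H4.
    + intro q. simpl. tauto.
Qed.

Theorem mainTheorem3
  (tau : (baire -> Prop) -> Prop)
  (Htop : is_topology tau)
  (HS : pi_tree tau (fun _ => True) S_std)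
  (U : nat -> baire -> Prop)
  (HU : forall n, baire_open (U n) /\ pi_dense (U n)) :
  exists F : list nat -> baire -> Prop,
    pi_tree tau (fun q => forall n, U n q) F.
Proof.
  destruct HS as [[HSo _] HSg].
  exists (fun x => leaf U (desc U x)).
  assert (NE : forall x, exists q, leaf U (desc U x) q).
  { intro x. exists (ppt U (fun i => nth i x 0)).
    pose proof (ppt_leaf U HU (fun i => nth i x 0) (length x)) as H. unfold D in H.
    replace (pre (fun i => nth i x 0) (length x)) with x in H; auto.
    apply S_std_pre. intros i Hi. reflexivity. }
  split; [split; [|split; [|split]]|].
  -
    intro x. destruct (leaf_open U (desc U x)) as [A [HA HAe]].
    destruct (bo_tau tau Htop HSo A HA) as [V [HV HVe]].
    exists V. split; auto. intro q. rewrite HAe, HVe. reflexivity.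
  -
    intros x _. split.
    + intro q. rewrite (LS1 U HU _ q (Inv_desc U HU x)). split.
      * intros [m Hm]. exists (x ++ [m]). split; [exists m; reflexivity|]. rewrite desc_snoc. exact Hm.
      * intros [s [[m ->] Hm]]. exists m. rewrite desc_snoc in Hm. exact Hm.
    + intros s t q [n ->] [m ->] Hst Hs Ht. rewrite desc_snoc in Hs, Ht.
      apply (LS2 U HU (desc U x) n m q (Inv_desc U HU x)); auto.
      intros ->. apply Hst. reflexivity.
  -
    intros Bb HB. destruct (branch_seq Bb HB) as [beta Hbeta].
    exists (ppt U beta). intro q. split.
    + intro Hq. apply (ppt_unique U HU beta q). intro j. unfold D. apply Hq.
      apply Hbeta. apply S_std_pre_self.
    + intros -> x Hx. apply Hbeta in Hx. apply S_std_pre in Hx. rewrite Hx.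
      apply (ppt_leaf U HU beta (length x)).
  -
    intro q. simpl. split; [tauto|]. intro H. split; [exact H|apply S_std_nil].
  -
    intros p U' Hp [W [HW HU'W]] HU'p.
    assert (HWp : W p) by (apply HU'W in HU'p; tauto).
    destruct (HSg p W I (ex_intro _ W (conj HW (fun x => conj (fun h => conj h I) (fun h => proj1 h)))) HWp)
      as [z [Hz Hgg]].
    destruct (Hgg W eq_refl (ex_intro _ p HWp)) as [G [[C [[HCs [l Hl]] HG]] [_ HGW]]].
    assert (HCW : forall n q, C (z ++ [n]) -> S_std (z ++ [n]) q -> W q).
    { intros n q Hn Hq. apply HGW. apply HG. eauto. }
    set (M := lmax (map (fun s => last s 0) l)).
    assert (HCM : forall n, M < n -> C (z ++ [n])).
    { intros n Hn. apply NNPP. intro Hc.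
      assert (HI : In (z ++ [n]) l) by (apply Hl; split; [exists n; reflexivity|exact Hc]).
      assert (In n (map (fun s => last s 0) l)).
      { replace n with (last (z ++ [n]) 0) by apply last_last. apply (in_map (fun s => last s 0)). auto. }
      pose proof (lmax_in _ _ H). lia. }
    assert (Hzp : z = pre p (length z)) by (apply S_std_pre; auto).
    destruct (aligned U HU p (length z) Hp [] (conj Hp (S_std_nil p)) ltac:(simpl; lia)) as [x [Hx HAl]].
    rewrite <- Hzp in HAl.
    assert (Hdig : exists off K (g : nat -> nat), (forall k, k <= g k) /\
              (forall k, desc U (x ++ [k + off]) = Phi (z ++ [g k]) (S K)) /\ off <= 1).
    { destruct HAl as [[K [Hd Hin]]|[u [K [c [i [Hd Hl']]]]]].
      - exists 0, K, (fun k => k). split; [auto|]. split; [|lia]. intro k.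
        rewrite desc_snoc, Hd. simpl. destruct (excluded_middle_informative (inU U K z)); [|tauto].
        rewrite Nat.add_0_r. reflexivity.
      - pose proof (Inv_desc U HU x) as HI. rewrite Hd in HI. destruct HI as [_ [Hb _]].
        pose proof (piece_inf_ch U HU u K c i Hb) as Hinf.
        exists (if lt_dec i (LL U u K c) then 1 else 0), K,
          (enum (piece U u K c (lvl U u K c i))).
        split; [intro k; apply enum_ge; auto|]. split.
        + intro k. rewrite desc_snoc, Hd. simpl. rewrite <- Hl'.
          destruct (lt_dec i (LL U u K c)).
          * rewrite Nat.add_1_r. reflexivity.
          * rewrite Nat.add_0_r. reflexivity.
        + destruct (lt_dec i (LL U u K c)); lia. }
    destruct Hdig as [off [K [g [Hg [Hdesc Hoff]]]]].
    exists x. split; [exact Hx|].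
    intros D0 HD0 _. subst D0.
    set (C' := fun s => exists k, s = x ++ [k + off] /\ C (z ++ [g k])).
    exists (fun q => exists s, C' s /\ leaf U (desc U s) q). split; [|split].
    + exists C'. split; [split|].
      * intros s [k [-> _]]. exists (k + off). reflexivity.
      * exists (map (fun m => x ++ [m]) (seq 0 (M + 2))).
        intros s [[m ->] Hc]. apply (in_map (fun m => x ++ [m])). apply in_seq. split; [lia|].
        destruct (le_lt_dec off m) as [Hm|Hm]; [|lia].
        destruct (le_lt_dec (m - off) M) as [Hk|Hk]; [lia|].
        exfalso. apply Hc. exists (m - off). split; [f_equal; f_equal; lia|].
        apply HCM. pose proof (Hg (m - off)). lia.
      * intro q. reflexivity.
    + destruct (NE (x ++ [S M + off])) as [q Hq]. exists q, (x ++ [S M + off]). split; [|exact Hq].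
      exists (S M). split; [reflexivity|]. apply HCM. pose proof (Hg (S M)). lia.
    + intros q [s [[k [-> Hk]] Hq]]. rewrite Hdesc in Hq. destruct Hq as [HYq Hq].
      apply HU'W. split; auto. apply (HCW (g k)); auto.
Qed.
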